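(* Let $\Phi=\forall u_1\ldots\forall u_n\exists e_1(D_1)\ldots\exists e_m(D_m).\varphi$ be a DQBF, let $\tau$ be a (partial) assignment to a set $A$ of arbiter variables, and let $\rho\in[U]$. If $\varphi^\rho\wedge\tau^\rho$ is unsatisfiable, then some subclause of the clause $\neg\tau^\rho$ (the disjunction of the negations of the literals in $\tau^\rho$) is derivable from $\Phi$ in the $\forall$Exp+Res calculus.
   Context: For a set $V$ of variables, $[V]$ is the set of assignments $V\to\{\textsc{true},\textsc{false}\}$; assignments are identified with terms of the literals they make true, and $\sigma|_W$ denotes restriction. A DQBF is $\Phi=\forall u_1\ldots\forall u_n\exists e_1(D_1)\ldots\exists e_m(D_m).\varphi$ with pairwise distinct variables, $U=\{u_i\}$, $E=\{e_j\}$, dependency sets $D(e_j)=D_j\subseteq U$, and $\varphi$ a CNF over $U\cup E$. For $e\in E$ and $\sigma\in[D(e)]$, $e^\sigma$ denotes an annotated (arbiter) variable, different annotations giving different variables; for a literal $\ell$ on $e$, $\ell^\sigma$ is the literal on $e^\sigma$ of the same polarity. For a partial assignment $\tau$ to arbiter variables and $\rho\in[U]$, $\tau^\rho=\{\ell^\sigma\in\tau\mid\rho\models\sigma\}$. For $\rho\in[U]$, $\varphi^\rho=\{\{x^{\rho|_{D(\mathit{var}(x))}}\mid x\in C,\ \mathit{var}(x)\in E\}\mid C\in\varphi,\ \text{no universal literal of }C\text{ is satisfied by }\rho\}$. The $\forall$Exp+Res calculus for $\Phi$ has two rules: (axiom) for any clause $C\in\varphi$ and any $\sigma\in[U]$ falsifying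 every universal literal of $C$, derive $\{\ell^{\sigma|_{D(\mathit{var}(\ell))}}\mid\ell\in C,\ \mathit{var}(\ell)\in E\}$; (resolution) from $C_1\cup\{x^\tau\}$ and $C_2\cup\{\neg x^\tau\}$ derive $C_1\cup C_2$. A clause is derivable from $\Phi$ if it is the last clause of a finite sequence each of whose clauses is obtained by one of these rules from earlier clauses. *)

(* Defs.v *)
From mathcomp Require Import all_boot.
Set Implicit Arguments. Unset Strict Implicit. Unset Printing Implicit Defensive.

Section DQBF.
(* n universal variables u_0..u_{n-1}, m existential variables e_0..e_{m-1}. *)
Variables (n m : nat).

(* A variable of the matrix: inl i = u_i (universal), inr j = e_j (existential). *)
Definition var := ('I_n + 'I_m)%type.
(* A literal: (variable, polarity); polarity true = positive literal. *)
Definition lit := (var * bool)%type.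
Definition clause := {set lit}.

Definition uassign := 'I_n -> bool.

(* An annotation sigma in [D_j] is
   encoded by the subset s of D_j of universals that sigma sets to true;
   (j, s) is a genuine arbiter variable iff s \subset D_j. *)
Definition avar := ('I_m * {set 'I_n})%type.
Definition alit := (avar * bool)%type.
Definition aclause := {set alit}.

Definition neg_alit (l : alit) : alit := (l.1, ~~ l.2).

Variable D : 'I_m -> {set 'I_n}.

(* rho|_W, encoded as the subset of W set true by rho. *)
Definition restr (rho : uassign) (W : {set 'I_n}) : {set 'I_n} :=
  [set u in W | rho u].

Definition models_annot (rho : uassign) (v : avar) : bool :=
  restr rho (D v.1) == v.2.

Definition is_arbiter (v : avar) : bool := v.2 \subset D v.1.

Definition falsifies_univ (rho : uassign) (C : clause) : Prop :=
  forall (i : 'I_n) (b : bool), (inl i, b) \in C -> rho i != b.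

Definition expand (rho : uassign) (C : clause) : aclause :=
  [set l : alit | (l.1.2 == restr rho (D l.1.1)) && ((inr l.1.1, l.2) \in C)].

Variable phi : seq clause.

Definition phi_rho (rho : uassign) : seq aclause :=
  map (expand rho)
    (filter (fun C : clause => [forall i : 'I_n, forall b : bool,
                                 (((inl i, b) : lit) \in C) ==> (rho i != b)]) phi).

Definition tau_rho (tau : {set alit}) (rho : uassign) : {set alit} :=
  [set l in tau | models_annot rho l.1].

Definition sat_alit (alpha : avar -> bool) (l : alit) : bool := alpha l.1 == l.2.
Definition sat_aclause (alpha : avar -> bool) (C : aclause) : bool :=
  [exists l in C, sat_alit alpha l].

Definition satisfiable_phi_tau (rho : uassign) (tau : {set alit}) : Prop :=
  exists alpha : avar -> bool,
    (forall C, C \in phi_rho rho -> sat_aclause alpha C) /\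
    (forall l, l \in tau_rho tau rho -> sat_alit alpha l).

Definition axiom_clause (K : aclause) : Prop :=
  exists (C : clause) (sigma : uassign),
    C \in phi /\ falsifies_univ sigma C /\ K = expand sigma C.

Definition resolvent (K1 K2 K : aclause) : Prop :=
  exists (C1 C2 : aclause) (l : alit),
    K1 = C1 :|: [set l] /\ K2 = C2 :|: [set neg_alit l] /\ K = C1 :|: C2.

Definition is_derivation (s : seq aclause) : Prop :=
  forall i, i < size s ->
    axiom_clause (nth set0 s i) \/
    exists j k, j < i /\ k < i /\
      resolvent (nth set0 s j) (nth set0 s k) (nth set0 s i).

Definition derivable (K : aclause) : Prop :=
  exists s : seq aclause, is_derivation s /\ s != [::] /\ last set0 s = K.

End DQBF.

(* Main.v *)
Require Import Defs.
From mathcomp Require Import all_boot.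
From mathcomp Require Import zify.
Set Implicit Arguments. Unset Strict Implicit. Unset Printing Implicit Defensive.

Inductive der (n m : nat) (D : 'I_m -> {set 'I_n}) (phi : seq (clause n m))
  : aclause n m -> Prop :=
| der_ax K : axiom_clause D phi K -> der D phi K
| der_res K1 K2 K : der D phi K1 -> der D phi K2 -> resolvent K1 K2 K -> der D phi K.

Lemma cat_der (n m : nat) (D : 'I_m -> {set 'I_n}) (phi : seq (clause n m)) s1 s2 :
  is_derivation D phi s1 -> is_derivation D phi s2 -> is_derivation D phi (s1 ++ s2).
Proof.
move=> h1 h2 i; rewrite size_cat => hi.
case: (ltnP i (size s1)) => hs.
- rewrite nth_cat hs. case: (h1 i hs) => [a|[j [k [hj [hk r]]]]]; [by left|right; exists j, k].
  by rewrite !nth_cat (ltn_trans hj hs) (ltn_trans hk hs).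
- rewrite nth_cat ltnNge hs /=.
  have hi2 : i - size s1 < size s2 by lia.
  case: (h2 _ hi2) => [a|[j [k [hj [hk r]]]]]; [by left| right; exists (size s1 + j), (size s1 + k)].
  rewrite !nth_cat !ltnNge !leq_addr /= !addKn. split; [lia|split;[lia|done]].
Qed.

Lemma snoc_der (n m : nat) (D : 'I_m -> {set 'I_n}) (phi : seq (clause n m)) s K :
  is_derivation D phi s ->
  (exists j k, j < size s /\ k < size s /\ resolvent (nth set0 s j) (nth set0 s k) K) ->
  is_derivation D phi (s ++ [:: K]).
Proof.
move=> h [j [k [hj [hk r]]]] i; rewrite size_cat /= => hi.
case: (ltnP i (size s)) => hs.
- rewrite nth_cat hs. case: (h i hs) => [a|[j' [k' [hj' [hk' r']]]]]; [by left|right; exists j', k'].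
  by rewrite !nth_cat (ltn_trans hj' hs) (ltn_trans hk' hs).
- have -> : i = size s by lia.
  right; exists j, k; rewrite !nth_cat hj hk ltnn subnn /=. by [].
Qed.

Lemma der_derivable (n m : nat) (D : 'I_m -> {set 'I_n}) (phi : seq (clause n m)) K :
  der D phi K -> derivable D phi K.
Proof.
elim=> {K} [K a|K1 K2 K _ [s1 [d1 [ne1 l1]]] _ [s2 [d2 [ne2 l2]]] r].
- exists [:: K]; split; last by [].
  move=> i /= hi; left; have -> : i = 0 by lia. exact a.
- exists ((s1 ++ s2) ++ [:: K]); split; last first.
    split; first by case: (s1 ++ s2).
    by rewrite last_cat.
  apply: snoc_der; first exact: cat_der.
  exists (size s1).-1, (size s1 + size s2).-1.
  have p1 : 0 < size s1 by case: s1 ne1 {d1 l1}.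
  have p2 : 0 < size s2 by case: s2 ne2 {d2 l2}.
  rewrite ?size_cat. split; first lia. split; first lia.
  rewrite !nth_cat.
  have -> : (size s1).-1 < size s1 by lia.
  rewrite ltnNge.
  have -> : size s1 <= (size s1 + size s2).-1 by lia.
  have -> : (size s1 + size s2).-1 - size s1 = (size s2).-1 by lia.
  by rewrite !nth_last l1 l2.
Qed.

Definition unassigned (n m : nat) (T : {set alit n m}) : {set avar n m} :=
  [set v | ((v, true) \notin T) && ((v, false) \notin T)].

Lemma phi_rho_axiom (n m : nat) (D : 'I_m -> {set 'I_n}) (phi : seq (clause n m)) rho C :
  C \in phi_rho D phi rho -> axiom_clause D phi C.
Proof.
case/mapP=> C0; rewrite mem_filter => /andP [/forallP hf hin] ->.
exists C0, rho; split; first by []; split; last by [].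
move=> i b hib. by move: (hf i) => /forallP /(_ b) /implyP; apply.
Qed.

Lemma sub_drop (T : finType) (K N : {set T}) x :
  K \subset x |: N -> x \notin K -> K \subset N.
Proof.
move=> h hx; apply/subsetP=> y hy; move: (subsetP h y hy); rewrite in_setU1.
case/orP=> [/eqP e|//]; by subst; rewrite hy in hx.
Qed.

Lemma neg_img_U1 (n m : nat) (T : {set alit n m}) x :
  [set neg_alit l | l in x |: T] = neg_alit x |: [set neg_alit l | l in T].
Proof. by rewrite imsetU1. Qed.

Lemma compl (n m : nat) (D : 'I_m -> {set 'I_n}) (phi : seq (clause n m)) rho k :
  forall T : {set alit n m}, #|unassigned T| <= k ->
  (forall l, l \in T -> neg_alit l \notin T) ->
  ~ (exists alpha : avar n m -> bool,
       (forall C, C \in phi_rho D phi rho -> sat_aclause alpha C) /\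
       (forall l, l \in T -> sat_alit alpha l)) ->
  exists K : aclause n m, K \subset [set neg_alit l | l in T] /\ der D phi K.
Proof.
elim: k => [|k IH] T hk hcons hunsat.
- have tot : forall v, ((v, true) \in T) || ((v, false) \in T).
    move=> v; apply/negPn/negP=> hv.
    have : v \in unassigned T by rewrite inE negb_or in hv *.
    by move: hk; rewrite leqn0 => /eqP/cards0_eq ->; rewrite inE.
  pose alpha := fun v : avar n m => (v, true) \in T.
  have satT : forall l, l \in T -> sat_alit alpha l.
    case=> v [] hl; rewrite /sat_alit /alpha /=; first by rewrite hl.
    by move: (hcons _ hl); rewrite /neg_alit /= => /negbTE ->.
  case: (boolP (all (sat_aclause alpha) (phi_rho D phi rho))) => hall.
    by exfalso; apply: hunsat; exists alpha; split=> // C /(allP hall).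
  case/allPn: hall => C hC hns.
  exists C; split; last by apply: der_ax; exact: phi_rho_axiom hC.
  apply/subsetP=> l hl; apply/imsetP; exists (neg_alit l); last first.
    by case: l {hl} => v b; rewrite /neg_alit /= negbK.
  have hl' : ~~ sat_alit alpha l.
    apply/negP=> hs; move: hns; rewrite /sat_aclause => /existsP; apply.
    by exists l; rewrite hl hs.
  case: l {hl} hl' => v [] /=; rewrite /sat_alit /alpha /neg_alit /=.
    by rewrite eqb_id => h; move: (tot v); rewrite (negbTE h).
  by rewrite eqbF_neg negbK.
- case: (leqP #|unassigned T| k) => hk'; first exact: IH.
  have : 0 < #|unassigned T| by lia.
  case/card_gt0P=> v hv; move: (hv); rewrite inE => /andP [hvt hvf].
  have sub : forall b, exists K : aclause n m, K \subset [set neg_alit l | l in (v, b) |: T] /\ der D phi K.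
    move=> b; apply: IH.
    - have : unassigned ((v, b) |: T) \subset unassigned T :\ v.
        apply/subsetP=> w; rewrite !inE !negb_or => /andP [/andP [h1 h2] /andP [h3 h4]].
        apply/andP; split; last by rewrite h2 h4. apply/eqP=> e; subst w.
        by case: b h1 h3; rewrite eqxx.
      move/subset_leq_card=> hc; move: (cardsD1 v (unassigned T)); rewrite hv /= => e; apply: leq_trans hc _; by move: hk; rewrite e add1n ltnS.
    - move=> l; rewrite in_setU1 => /orP [/eqP ->|hl].
        rewrite in_setU1 negb_or /neg_alit /=.
        apply/andP; split; first by case: b; rewrite xpair_eqE /= eqxx.
        by case: b.
      rewrite in_setU1 negb_or (hcons _ hl) andbT; apply/negP=> /eqP e.
      case: l hl e => w c; rewrite /neg_alit /= => hl [e1 e2]; subst w.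
      by case: c b e2 hl => [] [] //= _; rewrite ?(negbTE hvt) ?(negbTE hvf).
    - case=> alpha [h1 h2]; apply: hunsat; exists alpha; split=> // l hl.
      by apply: h2; rewrite in_setU1 hl orbT.
  case: (sub true) => K1 [s1 d1]; case: (sub false) => K2 [s2 d2].
  rewrite neg_img_U1 in s1; rewrite neg_img_U1 in s2.
  case: (boolP ((v, false) \in K1)) => h1; last first.
    by exists K1; split=> //; exact: (@sub_drop _ _ _ (v, false) s1 h1).
  case: (boolP ((v, true) \in K2)) => h2; last first.
    by exists K2; split=> //; exact: (@sub_drop _ _ _ (v, true) s2 h2).
  exists ((K1 :\ (v, false)) :|: (K2 :\ (v, true))); split.
    rewrite subUset; apply/andP; split.
      apply: (@sub_drop _ _ _ (v, false)); last by rewrite !inE eqxx.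
      by apply: subset_trans s1; apply: subD1set.
    apply: (@sub_drop _ _ _ (v, true)); last by rewrite !inE eqxx.
    by apply: subset_trans s2; apply: subD1set.
  apply: der_res d1 d2 _.
  exists (K1 :\ (v, false)), (K2 :\ (v, true)), (v, false); split.
    by rewrite setUC setD1K.
  by split=> //; rewrite setUC /neg_alit /= setD1K.
Qed.

Theorem lemma6 (n m : nat) (D : 'I_m -> {set 'I_n}) (phi : seq (clause n m))
    (tau : {set alit n m}) (rho : uassign n)
    (tau_arb : forall l, l \in tau -> is_arbiter D l.1)
    (tau_cons : forall l, l \in tau -> neg_alit l \notin tau) :
  ~ satisfiable_phi_tau D phi rho tau ->
  exists K : aclause n m,
    K \subset [set neg_alit l | l in tau_rho D tau rho] /\ derivable D phi K.
Proof.
move=> hunsat.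
have hc : forall l, l \in tau_rho D tau rho -> neg_alit l \notin tau_rho D tau rho.
  move=> l; rewrite !inE => /andP [hl _]; apply/negP=> /andP [h _].
  by move: (tau_cons _ hl); rewrite h.
have [K [hK hd]] := @compl n m D phi rho _ (tau_rho D tau rho) (leqnn _) hc hunsat.
by exists K; split=> //; exact: der_derivable.
Qed.
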